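(* Let $G$ be a finite group and let $m\in\mu(G)$. Then $|G|\cdot m^{\phi(m)}$ divides $\det(\mathbf{J}+\mathbf{Q}(\mathcal{P}(G)))$.
   Context: For a finite group $G$, the power graph $\mathcal{P}(G)$ is the simple undirected graph with vertex set $G$, two distinct vertices $x,y$ being adjacent iff $\langle x\rangle\subseteq\langle y\rangle$ or $\langle y\rangle\subseteq\langle x\rangle$. $\mathbf{Q}(\mathcal{P}(G))=\mathbf{\Delta}-\mathbf{A}$ is its Laplacian matrix ($\mathbf{A}$ the adjacency matrix, $\mathbf{\Delta}$ the diagonal matrix of vertex degrees), and $\mathbf{J}$ is the $|G|\times|G|$ all-ones matrix. $\mu(G)$ is the set of element orders of $G$ that are maximal with respect to divisibility among all element orders of $G$. $\phi$ is Euler's totient function. *)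

(* Defs.v *)
From mathcomp Require Import all_boot all_order all_algebra all_fingroup.
Set Implicit Arguments. Unset Strict Implicit. Unset Printing Implicit Defensive.
Import GRing.Theory Num.Theory.
Local Open Scope ring_scope.

Section PowerGraph.
Variables (gT : finGroupType) (G : {group gT}).

Definition pg_adj (x y : gT) : bool :=
  (x != y) && ((<[x]> \subset <[y]>)%g || (<[y]> \subset <[x]>)%g).

Definition pg_deg (x : gT) : nat := #|[set y in G | pg_adj x y]|.

Definition pg_vert (i : 'I_#|G|) : gT := enum_val i.

Definition pg_laplacian : 'M[int]_#|G| :=
  \matrix_(i, j) (if i == j then (pg_deg (pg_vert i))%:Z
                  else - ((pg_adj (pg_vert i) (pg_vert j) : nat)%:Z)).

Definition pg_JQ : 'M[int]_#|G| := const_mx 1 + pg_laplacian.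

Definition mu_orders (m : nat) : Prop :=
  (exists2 x, x \in G & #[x]%g = m) /\
  (forall y, y \in G -> (m %| #[y]%g)%N -> #[y]%g = m).

End PowerGraph.

(* Main.v *)
Require Import Defs.
From mathcomp Require Import all_boot all_order all_algebra all_fingroup.
From mathcomp Require Import cyclic.
Set Implicit Arguments. Unset Strict Implicit. Unset Printing Implicit Defensive.
Import GRing.Theory Num.Theory.
Local Open Scope ring_scope.
Lemma det_dvd_cols N (A : 'M[int]_N) (d : 'I_N -> int) :
  (forall i j, (d j %| A i j)%Z) -> (\prod_j d j %| \det A)%Z.
Proof.
move=> H.
have -> : A = (\matrix_(i, j) (A i j %/ d j)%Z) *m diag_mx (\row_j d j).
  by apply/matrixP => i j; rewrite mul_mx_diag !mxE divzK.
rewrite det_mulmx det_diag.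
under eq_bigr do rewrite mxE.
exact: dvdz_mull.
Qed.

Lemma unit_cancel N (M U W : 'M[int]_N) d :
  U *m W = 1%:M -> (d %| \det (M *m U))%Z -> (d %| \det M)%Z.
Proof.
move=> UW H.
have -> : M = M *m U *m W by rewrite -mulmxA UW mulmx1.
by rewrite det_mulmx; apply: dvdz_mulr.
Qed.

Lemma sum_delta N (F : 'I_N -> int) j : \sum_l F l * (l == j)%:R = F j.
Proof.
rewrite (bigD1 j) //= eqxx mulr1 big1 ?addr0 // => l /negbTE ->; by rewrite mulr0.
Qed.
Definition colsum_mx N (j0 : 'I_N) : 'M[int]_N :=
  \matrix_(l, j) if j == j0 then 1 else (l == j)%:R.
Definition colsum_inv N (j0 : 'I_N) : 'M[int]_N :=
  \matrix_(l, j) if j == j0 then (if l == j0 then 1 else -1) else (l == j)%:R.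
Lemma colsumK N (j0 : 'I_N) : colsum_mx j0 *m colsum_inv j0 = 1%:M.
Proof.
apply/matrixP => i j; rewrite !mxE.
case: (eqVneq j j0) => [->|nj].
  rewrite (bigD1 j0) //= !mxE !eqxx mul1r.
  under eq_bigr => l nl do rewrite !mxE eqxx (negbTE nl) mulrN1.
  case: (eqVneq i j0) => [->|ni].
    by rewrite big1 ?addr0 // => l nl; rewrite eq_sym (negbTE nl) oppr0.
  rewrite (bigD1 i) //= eqxx big1 ?addr0 ?subrr //.
  by move=> l /andP[_ /negbTE]; rewrite eq_sym => ->; rewrite oppr0.
under eq_bigr do rewrite [X in _ * X]mxE (negbTE nj).
by rewrite sum_delta mxE (negbTE nj).
Qed.
Definition diff_mx N (T : {set 'I_N}) p : 'M[int]_N :=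
  \matrix_(l, j) if j \in T then (l == j)%:R - (l == p)%:R else (l == j)%:R.
Definition diff_inv N (T : {set 'I_N}) p : 'M[int]_N :=
  \matrix_(l, j) if j \in T then (l == j)%:R + (l == p)%:R else (l == j)%:R.

Lemma mul_diff N (A : 'M[int]_N) T p i j :
  (A *m diff_mx T p) i j = if j \in T then A i j - A i p else A i j.
Proof.
rewrite mxE; case: ifP => jT.
  under eq_bigr do rewrite mxE jT mulrBr.
  by rewrite sumrB !sum_delta.
by under eq_bigr do rewrite mxE jT; rewrite sum_delta.
Qed.

Lemma diffK N (T : {set 'I_N}) p : p \notin T -> diff_mx T p *m diff_inv T p = 1%:M.
Proof.
move=> pT; apply/matrixP => i j; rewrite [LHS]mxE [RHS]mxE.
case jT: (j \in T).
  under eq_bigr do rewrite [X in _ * X]mxE jT mulrDr.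
  rewrite big_split /= !sum_delta !mxE jT (negbTE pT).
  by rewrite subrK.
under eq_bigr do rewrite [X in _ * X]mxE jT.
by rewrite sum_delta mxE jT.
Qed.

Lemma mul_colsum N (A : 'M[int]_N) j0 i j :
  (A *m colsum_mx j0) i j = if j == j0 then \sum_l A i l else A i j.
Proof.
rewrite mxE; case: eqP => [->|/eqP nj].
  by apply: eq_bigr => l _; rewrite mxE eqxx mulr1.
by under eq_bigr do rewrite mxE (negbTE nj); rewrite sum_delta.
Qed.

Lemma P1 (k : nat) : (0 < k)%N -> 1 + Posz k.-1 = Posz k.
Proof. by case: k => // k _; rewrite /= -(PoszD 1%N). Qed.

Theorem theorem3p7 (gT : finGroupType) (G : {group gT}) (m : nat) :
  mu_orders G m ->
  ((Posz (#|G| * m ^ totient m)%N) %| (\det (pg_JQ G))%R)%Z.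
Proof.
move=> [[x xG ox] Hmax].
have m_gt0 : (0 < m)%N by rewrite -ox order_gt0.
have [m1|m_gt1] := eqVneq m 1%N.
  have G1 : G = 1%g :> {set gT}.
    apply/trivgP/subsetP => y yG; rewrite inE -order_eq1.
    by apply/eqP; rewrite -m1; apply: Hmax; rewrite // m1 dvd1n.
  suff -> : Posz (#|G| * m ^ totient m)%N = 1 by rewrite dvd1z.
  by rewrite G1 cards1 m1 exp1n.
have x1 : x != 1%g by rewrite -order_eq1 ox.
set C := <[x]>%g.
have CG : C \subset G by rewrite cycle_subG.
have cardC : #|C| = m by [].
have key : forall y, y \in G -> ((<[y]> \subset C) || (C \subset <[y]>))%g = (y \in C).
  move=> y yG; rewrite cycle_subG; case yC: (y \in C) => //=.
  apply/negP => sCy.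
  have oy : #[y]%g = m by apply: Hmax => //; rewrite -ox; exact: cardSg sCy.
  have: C == <[y]>%g by rewrite eqEcard sCy /= -orderE oy cardC.
  by move/eqP => eC; move: yC; rewrite eC cycle_id.
have adjS1 : forall s y, s \in G -> <[s]>%g = C -> y \in G -> pg_adj s y = (s != y) && (y \in C).
  by move=> s y sG sC yG; rewrite /pg_adj sC orbC key.
have adjS2 : forall s y, s \in G -> <[s]>%g = C -> y \in G -> pg_adj y s = (y != s) && (y \in C).
  by move=> s y sG sC yG; rewrite /pg_adj sC key.
set n := #|G|.
set v := @pg_vert gT G.
have vG : forall i, v i \in G by move=> i; exact: enum_valP.
have vinj : injective v by move=> i1 i2; exact: enum_val_inj.
have mn : (m %| n)%N by rewrite -cardC; exact: cardSg.
have Mij : forall i j, pg_JQ G i j = 1 + (if i == j then (pg_deg G (v i))%:Z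
                  else - ((pg_adj (v i) (v j) : nat)%:Z)).
  by move=> i j; rewrite /pg_JQ !mxE.
have degS : forall s, s \in G -> <[s]>%g = C -> pg_deg G s = m.-1.
  move=> s sG sC; rewrite /pg_deg.
  have -> : [set y in G | pg_adj s y] = C :\ s.
    apply/setP => y; rewrite !inE; case yG: (y \in G).
      by rewrite adjS1 // eq_sym.
    by case yC: (y \in C); rewrite ?andbF //; move: yG; rewrite (subsetP CG y yC).
  have := cardsD1 s C; rewrite -sC cycle_id sC cardC => ->.
  by rewrite add1n.
have deg1 : pg_deg G 1%g = n.-1.
  rewrite /pg_deg.
  have -> : [set y in G | pg_adj 1%g y] = G :\ 1%g.
    by apply/setP => y; rewrite !inE /pg_adj cycle1 sub1G ?orbT ?andbT andbC eq_sym.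
  by rewrite /n (cardsD1 1%g G) group1 add1n.
have cnt : forall z, #|[set y in G | pg_adj z y]| = (\sum_(j < #|G|) (pg_adj z (v j) : nat))%N.
  move=> z; rewrite /v /pg_vert -(big_enum_val (A := mem G) (fun y => (pg_adj z y : nat))) /=.
  rewrite -sum1_card big_mkcond /= [RHS]big_mkcond /=; apply: eq_bigr => y _.
  by rewrite inE; case: (y \in G); case: pg_adj.
have rowsum : forall i, \sum_j pg_JQ G i j = n%:Z.
  move=> i.
  have -> : \sum_j pg_JQ G i j = \sum_j (1 + ((pg_deg G (v i))%:Z * (j == i)%:R
                                   - (pg_adj (v i) (v j) : nat)%:Z)).
    apply: eq_bigr => j _; rewrite Mij; case: (eqVneq i j) => [->|nij].
      by rewrite ?eqxx /pg_adj ?eqxx /= mulr1 subr0.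
    by rewrite ?(negbTE nij) mulr0 add0r.
  rewrite big_split /= sumrB sum_delta sumr_const card_ord.
  rewrite -(big_morph Posz PoszD (erefl (Posz 0))) -cnt /pg_deg.
  by rewrite subrr addr0 natz.
pose je := enum_rank_in xG 1%g.
pose js1 := enum_rank_in xG x.
have vje : v je = 1%g by rewrite /v /pg_vert enum_rankK_in.
have vjs1 : v js1 = x by rewrite /v /pg_vert enum_rankK_in.
pose S' := [set i | <[v i]>%g == C].
have js1S : js1 \in S' by rewrite inE vjs1.
have jeS : je \notin S'.
  rewrite inE vje cycle1; apply/negP => /eqP C1.
  by move: cardC; rewrite -C1 cards1 => m1'; rewrite -m1' in m_gt1.
have colE : forall i, pg_JQ G i je = if i == je then n%:Z else 0.
  move=> i; rewrite Mij; case: (eqVneq i je) => [->|nij].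
    by rewrite vje deg1 P1 // cardG_gt0.
  rewrite vje /pg_adj cycle1 sub1G orbT andbT.
  have -> : v i != 1%g by rewrite -vje; apply/eqP => /vinj; apply/eqP.
  by rewrite /= subrr.
have colS : forall i j, j \in S' -> pg_JQ G i j = if i == j then m%:Z else (v i \notin C : nat)%:Z.
  move=> i j; rewrite inE => /eqP sC; rewrite Mij; case: (eqVneq i j) => [->|nij].
    by rewrite degS // P1.
  rewrite adjS2 //.
  have -> : v i != v j by apply/eqP => /vinj; apply/eqP.
  by case: (v i \in C).
have vC : forall i, i \in S' -> v i \in C by move=> i; rewrite inE => /eqP <-; exact: cycle_id.
have cardS : #|S'| = totient m.
  rewrite -ox (totient_gen x).
  have -> : [set y | generator <[x]> y] = v @: S'.
    apply/setP => y; rewrite inE /generator; apply/idP/imsetP.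
      move=> /eqP Cy.
      have yG : y \in G by rewrite -cycle_subG -Cy.
      exists (enum_rank_in xG y); last by rewrite /v /pg_vert enum_rankK_in.
      by rewrite inE /v /pg_vert enum_rankK_in // -Cy.
    by case=> i; rewrite inE => /eqP Ci ->; rewrite Ci.
  by rewrite card_imset.
have k_gt0 : (0 < totient m)%N by rewrite totient_gt0.
have [j0 /andP[j0e j0S] | none] := pickP (fun j => (j != je) && (j \notin S')).
  pose T := S' :\ js1.
  have js1T : js1 \notin T by rewrite setD11.
  apply: (unit_cancel (colsumK j0)).
  apply: (unit_cancel (diffK js1T)).
  pose d := fun j : 'I_#|G| => ((if j == je then n%:Z else 1) * (if j == j0 then n%:Z else 1)
                    * (if j \in T then m%:Z else 1)).
  apply: dvdz_trans (det_dvd_cols (d := d) _).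
    rewrite /d !big_split /= -!big_mkcond /= !big_pred1_eq prodr_const.
    have cT : #|T| = (totient m).-1 by rewrite -cardS (cardsD1 js1 S') js1S.
    rewrite cT.
    have E : n%:Z * n%:Z * m%:Z ^+ (totient m).-1 = Posz (n * n * m ^ (totient m).-1)%N.
      by rewrite !PoszM -!natz natrX.
    have h : (n * m ^ totient m %| n * n * m ^ (totient m).-1)%N.
      rewrite -{1}(prednK k_gt0) expnS mulnA [(n * m)%N]mulnC -mulnA.
      by rewrite -[(n * n * _)%N]mulnA; apply: dvdn_mul.
    by rewrite E; exact: h.
  move=> i j; rewrite mul_diff !mul_colsum /d.
  have js1j0 : (js1 == j0) = false.
    by apply/negbTE; apply: contraNneq j0S => <-.
  rewrite js1j0.
  case jT: (j \in T).
    move: (jT); rewrite /T !inE => /andP[jns1 jS'].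
    have jS : j \in S' by rewrite inE.
    have jj0 : (j == j0) = false by apply/negbTE; apply: contraNneq j0S => <-.
    have jje : (j == je) = false by apply/negbTE; apply: contraNneq jeS => <-.
    rewrite jj0 jje !mul1r (colS i j jS) (colS i js1 js1S).
    case: (eqVneq i j) => [->|nij].
      by rewrite (negbTE jns1) vC //= subr0 dvdzz.
    case: (eqVneq i js1) => [->|nis1].
      by rewrite vC //= sub0r -mulrN1 dvdz_mulr ?dvdzz.
    by rewrite subrr dvdz0.
  rewrite mulr1.
  case: (eqVneq j j0) => [->|njj0].
    by rewrite (negbTE j0e) mul1r rowsum dvdzz.
  case: (eqVneq j je) => [->|nje].
    by rewrite mulr1 colE; case: ifP => _; rewrite ?dvdzz ?dvdz0.
  by rewrite mul1r dvd1z.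
pose d := fun j : 'I_#|G| => (if j == je then n%:Z else 1) * (if j \in S' then m%:Z else 1).
apply: dvdz_trans (det_dvd_cols (d := d) _).
  rewrite /d big_split /= -!big_mkcond /= big_pred1_eq prodr_const cardS.
  have E : n%:Z * m%:Z ^+ totient m = Posz (n * m ^ totient m)%N.
    by rewrite PoszM -!natz natrX.
  by rewrite E dvdzz.
move=> i j; rewrite /d.
have viC : v i \in C.
  case: (eqVneq i je) => [->|nie]; first by rewrite vje group1.
  by apply: vC; move: (none i); rewrite nie /= => /negbFE.
case: (eqVneq j je) => [->|nje].
  by rewrite (negbTE jeS) mulr1 colE; case: ifP => _; rewrite ?dvdzz ?dvdz0.
case jS: (j \in S').
  by rewrite mul1r colS //; case: ifP => _; rewrite ?dvdzz // viC dvdz0.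
by rewrite mulr1 dvd1z.
Qed.
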